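(* Consider the deterministic discrete-time LTI system $$\bar x_{k+1}=\mathcal{A}_\mathrm{L}\bar x_k+\mathcal{B}_\mathrm{L}u_k,\qquad y_k=\begin{bmatrix}\mathcal{C}&\mathcal{C}_\mathrm{d}\end{bmatrix}\bar x_k+\mathcal{D}u_k,$$ with $\bar x_k=[x_k^\top\ d_k^\top]^\top\in\mathbb{R}^{\bar n}$, $x_k\in\mathbb{R}^{n_\mathrm{x}}$, $d_k\in\mathbb{R}^{n_\mathrm{d}}$, $\bar n=n_\mathrm{x}+n_\mathrm{d}$, $u_k\in\mathbb{R}^{n_\mathrm{u}}$, $y_k\in\mathbb{R}^{n_\mathrm{y}}$, $\mathcal{A}_\mathrm{L}=\begin{bmatrix}\mathcal{A}&\mathcal{B}_\mathrm{d}\\0&\mathcal{A}_\mathrm{d}\end{bmatrix}$, $\mathcal{B}_\mathrm{L}=\begin{bmatrix}\mathcal{B}\\0\end{bmatrix}$. Let $\{u^\mathrm{m}_k\}_{k=0}^{N+L+\bar n-2}$ be a measured input sequence with resulting state trajectory $\bar x^\mathrm{m}_k=[(x^\mathrm{m}_k)^\top\ (d^\mathrm{m}_k)^\top]^\top$ and output trajectory $y^\mathrm{m}_k$. Assume that $(\mathcal{A},\mathcal{B})$ is controllable, that the controllability matrix $\mathcal{K}_\mathrm{d}:=\begin{bmatrix}d^\mathrm{m}_0&\mathcal{A}_\mathrm{d}d^\mathrm{m}_0&\cdots&\mathcal{A}_\mathrm{d}^{n_\mathrm{d}-1}d^\mathrm{m}_0\end{bmatrix}$ has rank $\nu$ with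 $1\le\nu<n_\mathrm{d}$, and that $\{u^\mathrm{m}_k\}$ is persistently exciting of order $L+\bar n$. Then: (i) $\operatorname{rank}\begin{bmatrix}\mathcal{H}_{0,1,N+\bar n}(\bar x^\mathrm{m})\\ \mathcal{H}_{0,L,N+\bar n}(u^\mathrm{m})\end{bmatrix}=Ln_\mathrm{u}+n_\mathrm{x}+\nu$; (ii) for every $x_0\in\mathbb{R}^{n_\mathrm{x}}$, every $d_0$ in the column space of $\mathcal{K}_\mathrm{d}$, and every $u_{[0,L-1]}\in\mathbb{R}^{Ln_\mathrm{u}}$, with $\bar x_0=[x_0^\top\ d_0^\top]^\top$, there exists $g\in\mathbb{R}^{N+\bar n}$ such that $$\begin{bmatrix}\mathcal{H}_{0,1,N+\bar n}(\bar x^\mathrm{m})\\ \mathcal{H}_{0,L,N+\bar n}(u^\mathrm{m})\end{bmatrix}g=\begin{bmatrix}\bar x_0\\ u_{[0,L-1]}\end{bmatrix};$$ (iii) for every $L$-long input-output trajectory $(u_{[0,L-1]},y_{[0,L-1]})$ of the system whose initial state $\bar x_0=[x_0^\top\ d_0^\top]^\top$ has $d_0$ in the column space of $\mathcal{K}_\mathrm{d}$, there exists $g\in\mathbb{R}^{N+\bar n}$ such that $$\begin{bmatrix}\mathcal{H}_{0,L,N+\bar n}(u^\mathrm{m})\\ \mathcal{H}_{0,L,N+\bar n}(y^\mathrm{m})\end{bmatrix}g=\begin{bmatrix}u_{[0,L-1]}\\ y_{[0,L-1]}\end{bmatrix}.$$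
   Context: For a sequence $\{w_k\}$ and integers $i$, $s\ge1$, $N\ge1$, the block-Hankel matrix $\mathcal{H}_{i,s,N}(w)$ is the matrix with $s$ block rows and $N$ columns whose $(a,b)$ block entry is $w_{i+a+b-2}$ (first row $[w_i\ \cdots\ w_{i+N-1}]$, last row $[w_{i+s-1}\ \cdots\ w_{i+N+s-2}]$). A sequence $\{w_k\}_{k=i}^{i+N+s-2}$ is persistently exciting of order $s$ if $\mathcal{H}_{i,s,N}(w)$ has full row rank. The stacked vector $u_{[k_1,k_2]}:=[u_{k_1}^\top\ u_{k_1+1}^\top\ \cdots\ u_{k_2}^\top]^\top$, and similarly for $y$. A pair $(A,B)$ with $A\in\mathbb{R}^{q\times q}$ is controllable if $[B\ AB\ \cdots\ A^{q-1}B]$ has rank $q$. *)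

(* Defs.v *)
From mathcomp Require Import all_boot all_order all_algebra.
Set Implicit Arguments. Unset Strict Implicit. Unset Printing Implicit Defensive.
Import GRing.Theory Num.Theory.
Local Open Scope ring_scope.

Definition hankel (R : pzRingType) (p : nat) (w : nat -> 'cV[R]_p) (i s N : nat)
  : 'M[R]_(\sum_(a < s) p, N) :=
  \mxcol_(a < s) (\matrix_(j < p, b < N) w (i + a + b)%N j ord0).

Definition stack (R : pzRingType) (p : nat) (w : nat -> 'cV[R]_p) (L : nat)
  : 'cV[R]_(\sum_(a < L) p) := \mxcol_(a < L) w a.

Definition pers_exc (R : fieldType) (p : nat) (w : nat -> 'cV[R]_p) (i s N : nat) :=
  row_free (hankel w i s N).

Definition ctrb_mx (R : pzRingType) (q m : nat) (A : 'M[R]_q) (B : 'M[R]_(q, m))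
  : 'M[R]_(q, \sum_(i < q) m) := \mxrow_(i < q) (A ^+ i *m B).

Definition controllable (R : fieldType) (q m : nat) (A : 'M[R]_q) (B : 'M[R]_(q, m)) :=
  \rank (ctrb_mx A B) = q.

Definition AL (R : pzRingType) (nx nd : nat) (A : 'M[R]_nx) (Bd : 'M[R]_(nx, nd))
  (Ad : 'M[R]_nd) : 'M[R]_(nx + nd) := block_mx A Bd 0 Ad.
Definition BL (R : pzRingType) (nx nd nu : nat) (B : 'M[R]_(nx, nu))
  : 'M[R]_(nx + nd, nu) := col_mx B 0.

Fixpoint traj (R : pzRingType) (n m : nat) (Ab : 'M[R]_n) (Bb : 'M[R]_(n, m))
  (x0 : 'cV[R]_n) (u : nat -> 'cV[R]_m) (k : nat) : 'cV[R]_n :=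
  match k with
  | 0 => x0
  | k'.+1 => Ab *m traj Ab Bb x0 u k' + Bb *m u k'
  end.

Definition outp (R : pzRingType) (n m ny : nat) (Ab : 'M[R]_n) (Bb : 'M[R]_(n, m))
  (Cb : 'M[R]_(ny, n)) (D : 'M[R]_(ny, m)) (x0 : 'cV[R]_n) (u : nat -> 'cV[R]_m)
  (k : nat) : 'cV[R]_ny := Cb *m traj Ab Bb x0 u k + D *m u k.

(* Main.v *)
Require Import Defs.
From mathcomp Require Import all_boot all_order all_algebra.
From Stdlib Require Import Lia.
From mathcomp Require Import zify.
Set Implicit Arguments. Unset Strict Implicit. Unset Printing Implicit Defensive.
Import GRing.Theory Num.Theory.
Local Open Scope ring_scope.

Section Gen.
Variable R : fieldType.

Lemma col_hankel p (w : nat -> 'cV[R]_p) i s N k :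
  col k (hankel w i s N) = \mxcol_(a < s) w (i + a + k)%N.
Proof.
rewrite /hankel col_mxcol; apply: eq_mxcol => a.
by apply/matrixP => r c; rewrite !mxE (ord1 c).
Qed.

Lemma hankel_mul p (w : nat -> 'cV[R]_p) i s N (g : 'cV[R]_N) :
  hankel w i s N *m g = \mxcol_(a < s) \sum_(b < N) g b 0 *: w (i + a + b)%N.
Proof.
apply/matrixP => r c; rewrite !mxE summxE (ord1 c).
by apply: eq_bigr => b _; rewrite !mxE mulrC.
Qed.

Lemma mul_hankel p s (w : nat -> 'cV[R]_p) i N (v : 'rV_(\sum_(a < s) p)) k :
  col k (v *m hankel w i s N) = \sum_(a < s) submxrow v a *m w (i + a + k)%N.
Proof.
by rewrite colE -mulmxA -colE col_hankel -{1}[v]submxrowK mul_mxrow_mxcol.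
Qed.

End Gen.


Lemma CH_exists (R : fieldType) n (A : 'M[R]_n) :
  exists c : nat -> R, c n = 1 /\ \sum_(j < n.+1) c j *: A ^+ j = 0.
Proof.
case: n A => [|n] A.
  exists (fun _ => 1); split => //; apply/matrixP => i; case: i => [] //.
have mon := char_poly_monic A.
have lc : lead_coef (char_poly A) = 1 by apply/monicP.
exists (fun j => (char_poly A)`_j); split.
  by move: lc; rewrite lead_coefE size_char_poly.
have := Cayley_Hamilton A.
rewrite /horner_mx /horner_morph horner_coef size_map_poly_id0; last first.
  by rewrite lc oner_neq0.
rewrite size_char_poly => CH; rewrite -[X in _ = X]CH; apply: eq_bigr => j _.
by rewrite coef_map_id0 // ?scalemx_const -?scalar_mxM ?mul_mx_scalar; [rewrite -mulmxE mul_scalar_mx | rewrite raddf0].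
Qed.

Lemma mxpowS (R : pzRingType) n p (A : 'M[R]_n) (v : 'M[R]_(n, p)) j :
  A ^+ j.+1 *m v = A *m (A ^+ j *m v).
Proof. by rewrite exprS mulmxA. Qed.

Section Core.
Variables (R : fieldType) (n m : nat) (Ab : 'M[R]_n) (Bb : 'M[R]_(n, m)).
Variables (u : nat -> 'cV[R]_m) (x : nat -> 'cV[R]_n).
Hypothesis hx : forall k, x k.+1 = Ab *m x k + Bb *m u k.

Lemma shift k j : x (k + j)%N = Ab ^+ j *m x k
   + \sum_(p < j) Ab ^+ (j - 1 - p) *m Bb *m u (k + p)%N.
Proof.
elim: j => [|j IH]; first by rewrite addn0 big_ord0 expr0 mul1mx addr0.
rewrite addnS hx IH big_ord_recr /= mulmxDr mulmx_sumr -mxpowS.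
have -> : (j.+1 - 1 - j = 0)%N by lia.
rewrite expr0 mul1mx -addrA; congr (_ + (_ + _)).
apply: eq_bigr => p _; rewrite !mulmxA -!mulmxA -mxpowS; congr (_ ^+ _ *m _).
by have := ltn_ord p; rewrite subn1 /=; lia.
Qed.

Variables (L N : nat).
Hypothesis hPE : forall c : nat -> 'rV[R]_m,
  (forall k, (k < N)%N -> \sum_(p < L + n) c p *m u (k + p)%N = 0) ->
  forall p, (p < L + n)%N -> c p = 0.

Lemma core (th : 'rV[R]_n) (eta : nat -> 'rV[R]_m) :
  (forall a, (L <= a)%N -> eta a = 0) ->
  (forall k, (k < N + n)%N -> th *m x k + \sum_(a < L) eta a *m u (k + a)%N = 0) ->
  (forall a, eta a = 0) /\ (forall i, (i < n)%N -> th *m Ab ^+ i *m Bb = 0).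
Proof.
move=> etaz hyp.
pose V j p := if (p < j)%N then th *m Ab ^+ (j - 1 - p) *m Bb else eta (p - j)%N.
have hv : forall j k, (j <= n)%N -> (k < N)%N ->
    th *m Ab ^+ j *m x k + \sum_(p < L + n) V j p *m u (k + p)%N = 0.
  move=> j k jn kN; have := hyp (k + j)%N ltac:(lia).
  rewrite shift mulmxDr mulmx_sumr -addrA => H; rewrite -[RHS]H mulmxA; congr (_ + _).
  rewrite -(big_mkord xpredT (fun p => V j p *m u (k + p)%N)).
  rewrite (big_cat_nat _ (n := j)) //=; last by lia.
  congr (_ + _).
    rewrite big_mkord; apply: eq_bigr => p _; rewrite /V ltn_ord !mulmxA //.
  rewrite -{1}[j]add0n big_addn (big_cat_nat _ (n := L)) //=; last by lia.
  rewrite [X in _ + X]big_nat_cond [X in _ + X]big1 ?addr0; last first.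
    move=> p /andP [/andP [Lp _] _]; rewrite /V ifN; last by lia.
    by rewrite etaz ?mul0mx //; lia.
  rewrite big_mkord; apply: eq_bigr => p _; rewrite /V ifN; last by lia.
  by rewrite addnK; congr (_ *m u _); lia.
have [c [cn csum]] := CH_exists Ab.
pose W p := \sum_(j < n.+1) c j *: V j p.
have hw : forall k, (k < N)%N -> \sum_(p < L + n) W p *m u (k + p)%N = 0.
  move=> k kN.
  have : \sum_(j < n.+1) c j *: (th *m Ab ^+ j *m x k
        + \sum_(p < L + n) V j p *m u (k + p)%N) = 0.
    by apply: big1 => j _; rewrite hv ?scaler0 //; have := ltn_ord j; lia.
  rewrite (eq_bigr _ (fun j _ => scalerDr _ _ _)) big_split /=.
  have -> : \sum_(j < n.+1) c j *: (th *m Ab ^+ j *m x k) = 0.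
    transitivity (th *m (\sum_(j < n.+1) c j *: Ab ^+ j) *m x k).
      rewrite mulmx_sumr mulmx_suml; apply: eq_bigr => j _.
      by rewrite -scalemxAr -scalemxAl.
    by rewrite csum mulmx0 mul0mx.
  rewrite add0r => H; rewrite -[RHS]H.
  rewrite /W; under eq_bigr do rewrite mulmx_suml.
  rewrite exchange_big /=; apply: eq_bigr => j _.
  rewrite scaler_sumr; apply: eq_bigr => p _; by rewrite scalemxAl.
have W0 := hPE hw.
have heta : forall q, eta q = 0.
  move=> q; have [s] := ubnP (L - q); elim: s q => [|s IH] q hq; first by lia.
  case: (leqP L q) => [/etaz//|qL].
  have := W0 (n + q)%N ltac:(lia); rewrite /W big_ord_recr /= /V.
  rewrite ifN; last by lia.
  rewrite addKn cn scale1r big1 ?add0r // => j _.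
  rewrite ifN; last by (have := ltn_ord j; lia).
  by rewrite IH ?scaler0 //; have := ltn_ord j; lia.
split => // i; elim/ltn_ind: i => i IH hin.
have := W0 (n - 1 - i)%N ltac:(lia); rewrite /W big_ord_recr /= /V.
rewrite ifT; last by lia.
have -> : (n - 1 - (n - 1 - i) = i)%N by lia.
rewrite cn scale1r big1 ?add0r // => j _.
case: ifP => h; last by rewrite heta scaler0.
by rewrite IH ?scaler0 //; have := ltn_ord j; simpl in h; lia.
Qed.
End Core.
Section Sys.
Variables (R : fieldType) (nx nd nu : nat).
Variables (A : 'M[R]_nx) (Bd : 'M[R]_(nx, nd)) (Ad : 'M[R]_nd) (B : 'M[R]_(nx, nu)).

Lemma traj_d x0 d0 u k :
  dsubmx (traj (AL A Bd Ad) (BL nd B) (col_mx x0 d0) u k) = Ad ^+ k *m d0.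
Proof.
elim: k => [|k IH] /=; first by rewrite col_mxKd expr0 mul1mx.
set t := traj _ _ _ _ k; rewrite -[t]vsubmxK /AL /BL mul_block_col mul_col_mx.
by rewrite add_col_mx col_mxKd IH mul0mx !add0r mul0mx addr0 mxpowS.
Qed.

Lemma ALpowB i : AL A Bd Ad ^+ i *m BL nd B = col_mx (A ^+ i *m B) 0.
Proof.
elim: i => [|i IH]; first by rewrite !expr0 !mul1mx.
by rewrite !mxpowS IH /AL mul_block_col !mulmx0 mul0mx !addr0.
Qed.
End Sys.

Section Traj.
Variables (R : fieldType) (n m : nat) (Ab : 'M[R]_n) (Bb : 'M[R]_(n, m)).

Lemma traj_ext x0 (u u' : nat -> 'cV[R]_m) k :
  (forall p, (p < k)%N -> u p = u' p) -> traj Ab Bb x0 u k = traj Ab Bb x0 u' k.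
Proof.
elim: k => [|k IH] h //=; rewrite IH ?h // => p pk; apply: h; lia.
Qed.

Lemma traj_super M (g : 'cV[R]_M) x0 (u : nat -> 'cV[R]_m) a :
  \sum_(b < M) g b 0 *: traj Ab Bb x0 u (a + b)%N =
  traj Ab Bb (\sum_(b < M) g b 0 *: traj Ab Bb x0 u b)
             (fun p => \sum_(b < M) g b 0 *: u (p + b)%N) a.
Proof.
elim: a => [|a IH] //=.
rewrite -IH mulmx_sumr mulmx_sumr -big_split /=; apply: eq_bigr => b _.
by rewrite scalerDr !scalemxAr.
Qed.
End Traj.

Lemma colspace_ker (R : fieldType) r M (H : 'M[R]_(r, M)) (t : 'cV[R]_r) :
  (forall w : 'rV[R]_r, w *m H = 0 -> w *m t = 0) -> exists g, H *m g = t.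
Proof.
move=> hk.
have : (t^T <= H^T)%MS.
  rewrite submxE; set K := cokermx H^T.
  have HK : K^T *m H = 0 by rewrite -[H]trmxK -trmx_mul mulmx_coker trmx0.
  have : K^T *m t = 0.
    apply/row_matrixP => i; rewrite row_mul row0 hk //.
    by rewrite -row_mul HK row0.
  by move=> e; rewrite -[_ *m K]trmxK trmx_mul trmxK e trmx0.
case/submxP => D e; exists D^T.
by rewrite -[t]trmxK e trmx_mul trmxK.
Qed.

Lemma rank_mxcol1 (R : fieldType) m n (X : 'M[R]_(m, n)) :
  \rank (\mxcol_(a < 1) X) = \rank X.
Proof. by rewrite [in RHS](mxEmxcol X) eqmx_cast. Qed.

Unset Implicit Arguments. Set Strict Implicit. Set Printing Implicit Defensive.

Theorem theorem2 (R : realFieldType) (nx nd nu ny N L nu_rk : nat)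
  (A : 'M[R]_nx) (Bd : 'M[R]_(nx, nd)) (Ad : 'M[R]_nd) (B : 'M[R]_(nx, nu))
  (C : 'M[R]_(ny, nx)) (Cd : 'M[R]_(ny, nd)) (D : 'M[R]_(ny, nu))
  (um : nat -> 'cV[R]_nu) (xm0 : 'cV[R]_nx) (dm0 : 'cV[R]_nd) :
  let Ab := AL A Bd Ad in
  let Bb := BL nd B in
  let Cb := row_mx C Cd in
  let xbm := traj Ab Bb (col_mx xm0 dm0) um in
  let ym := outp Ab Bb Cb D (col_mx xm0 dm0) um in
  let Kd := ctrb_mx Ad dm0 in
  controllable A B ->
  \rank Kd = nu_rk -> (1 <= nu_rk)%N -> (nu_rk < nd)%N ->
  pers_exc um 0 (L + (nx + nd)) N ->
  (* (i) *)
  \rank (col_mx (hankel xbm 0 1 (N + (nx + nd))) (hankel um 0 L (N + (nx + nd))))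
    = (L * nu + nx + nu_rk)%N
  /\
  (* (ii) *)
  (forall (x0 : 'cV[R]_nx) (d0 : 'cV[R]_nd) (u : nat -> 'cV[R]_nu),
     (exists v, d0 = Kd *m v) ->
     exists g : 'cV[R]_(N + (nx + nd)),
       col_mx (hankel xbm 0 1 (N + (nx + nd))) (hankel um 0 L (N + (nx + nd))) *m g
       = col_mx (stack (fun _ => col_mx x0 d0) 1) (stack u L))
  /\
  (* (iii) *)
  (forall (x0 : 'cV[R]_nx) (d0 : 'cV[R]_nd) (u : nat -> 'cV[R]_nu),
     (exists v, d0 = Kd *m v) ->
     exists g : 'cV[R]_(N + (nx + nd)),
       col_mx (hankel um 0 L (N + (nx + nd))) (hankel ym 0 L (N + (nx + nd))) *m g
       = col_mx (stack u L) (stack (outp Ab Bb Cb D (col_mx x0 d0) u) L)).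
Proof.
move=> Ab Bb Cb xbm ym Kd hctrl hrk h1 h2 hpe.
set M := (N + (nx + nd))%N.
set H := col_mx (hankel xbm 0 1 M) (hankel um 0 L M).
have hPE : forall c : nat -> 'rV[R]_nu,
    (forall k, (k < N)%N -> \sum_(p < L + (nx + nd)) c p *m um (k + p)%N = 0) ->
    forall p, (p < L + (nx + nd))%N -> c p = 0.
  move=> c hc p hp.
  have [Bi hBi] := row_freeP hpe.
  set w := \mxrow_(q < L + (nx + nd)) c q.
  have hw : w *m hankel um 0 (L + (nx + nd)) N = 0.
    apply/trmx_inj/row_matrixP => k; rewrite trmx0 row0 -tr_col mul_hankel.
    rewrite (eq_bigr (fun a : 'I_(L + (nx + nd)) => c a *m um (k + a)%N)).
      by rewrite hc ?trmx0.
    by move=> a _; rewrite mxrowK add0n (addnC (nat_of_ord a)).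
  have w0 : w = 0 by rewrite -[w]mulmx1 -hBi mulmxA hw mul0mx.
  by have := mxrowK (fun q : 'I_(L + (nx + nd)) => c q) (Ordinal hp); rewrite -/w w0 submxrow0.

pose P1 : 'M[R]_(\sum_(a < 1) (nx + nd), nx + \sum_(i < nd) 1) :=
  \mxcol_(a < 1) block_mx 1%:M 0 0 Kd.
pose P : 'M[R]_(\sum_(a < 1) (nx + nd) + \sum_(a < L) nu,
                (nx + \sum_(i < nd) 1) + \sum_(a < L) nu) := block_mx P1 0 0 1%:M.
have hx : forall k, xbm k.+1 = Ab *m xbm k + Bb *m um k by [].
have KL : forall w : 'rV[R]_(\sum_(a < 1) (nx + nd) + \sum_(a < L) nu), w *m H = 0 -> w *m P = 0.
  move=> w hw.
  set w1 := lsubmx w; set w2 := rsubmx w.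
  pose th : 'rV[R]_(nx + nd) := submxrow w1 ord0.
  pose eta := fun a => oapp (fun i : 'I_L => submxrow w2 i) 0 (insub a).
  have etaE : forall i : 'I_L, eta i = submxrow w2 i by move=> i; rewrite /eta valK.
  have etaz : forall a, (L <= a)%N -> eta a = 0.
    by move=> a ha; rewrite /eta insubF //; apply/negbTE; rewrite -leqNgt.
  have hyp : forall k, (k < N + (nx + nd))%N ->
      th *m xbm k + \sum_(a < L) eta a *m um (k + a)%N = 0.
    move=> k hk.
    have := congr1 (col (Ordinal hk)) hw.
    rewrite -[w]hsubmxK mul_row_col colE mulmxDl -!colE !mul_hankel col0 -/w1 -/w2.
    rewrite big_ord1 !add0n => H0; rewrite -[RHS]H0; congr (_ + _).
    by apply: eq_bigr => a _; rewrite etaE add0n (addnC (nat_of_ord a)).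
  have [heta hG] := core hx hPE etaz hyp.
  set xi := lsubmx th; set ze := rsubmx th.
  have hxi : xi = 0.
    have rf : row_free (ctrb_mx A B) by rewrite /row_free hctrl.
    have [Ci hCi] := row_freeP rf.
    suff e : xi *m ctrb_mx A B = 0 by rewrite -[xi]mulmx1 -hCi mulmxA e mul0mx.
    rewrite /ctrb_mx mul_mxrow -(mxrow0 (q_ := fun _ : 'I_nx => nu)).
    apply: eq_mxrow => i.
    have := hG i ltac:(have := ltn_ord i; lia).
    rewrite -mulmxA /Ab /Bb ALpowB -[th]hsubmxK mul_row_col mulmx0 addr0.
    by rewrite mulmxA.
  have hze : ze *m Kd = 0.
    rewrite /Kd /ctrb_mx mul_mxrow -(mxrow0 (q_ := fun _ : 'I_nd => 1%N)).
    apply: eq_mxrow => i.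
    have := hyp i ltac:(have := ltn_ord i; lia).
    rewrite big1; last by move=> a _; rewrite heta mul0mx.
    rewrite addr0 -[th]hsubmxK -/xi -/ze -[xbm i]vsubmxK mul_row_col hxi mul0mx add0r.
    by rewrite /xbm traj_d mulmxA.
  rewrite -[w]hsubmxK /P mul_row_block !mulmx0 addr0 add0r mulmx1 -/w1 -/w2.
  have -> : w2 = 0.
    rewrite -[w2]submxrowK -(mxrow0 (q_ := fun _ : 'I_L => nu)); apply: eq_mxrow => a.
    by rewrite -etaE heta.
  rewrite -[w1]submxrowK /P1 mul_mxrow_mxcol big_ord1 -/th -[th]hsubmxK.
  rewrite mul_row_block !mulmx1 !mulmx0 addr0 add0r -/xi -/ze hxi hze.
  by rewrite !row_mx0.

have Pmul : forall x0 v (s : 'cV[R]_(\sum_(a < L) nu)),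
    P *m col_mx (col_mx x0 v) s = col_mx (\mxcol_(a < 1) col_mx x0 (Kd *m v)) s.
  move=> x0 v s; rewrite /P mul_block_col !mul0mx mul1mx addr0 add0r /P1 mxcol_mul.
  congr col_mx; apply: eq_mxcol => a.
  by rewrite mul_block_col !mul1mx !mul0mx addr0 add0r.
have ii : forall (x0 : 'cV[R]_nx) (d0 : 'cV[R]_nd) (u : nat -> 'cV[R]_nu),
    (exists v, d0 = Kd *m v) ->
    exists g : 'cV[R]_M, H *m g = col_mx (stack (fun _ => col_mx x0 d0) 1) (stack u L).
  move=> x0 d0 u [v ->]; apply: colspace_ker => w hw.
  by rewrite /stack -(Pmul x0 v (\mxcol_(a < L) u a)) mulmxA KL // mul0mx.
split; last split; [ | exact: ii | ].
  have inK : forall k, ((Ad ^+ k *m dm0)^T <= Kd^T)%MS.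
    have [c [cn csum]] := CH_exists Ad.
    elim/ltn_ind => k IH.
    case: (ltnP k nd) => hk.
      rewrite /Kd /ctrb_mx tr_mxrow.
      have := mxcolK (fun i : 'I_nd => (Ad ^+ i *m dm0)^T) (Ordinal hk) => /= <-.
      by rewrite /submxcol rowsubE submxMl.
    have e : Ad ^+ nd = - \sum_(j < nd) c j *: Ad ^+ j.
      have := csum; rewrite big_ord_recr /= cn scale1r => /eqP.
      by rewrite addrC addr_eq0 => /eqP.
    rewrite -(subnK hk) exprD e mulrN mulr_sumr mulNmx mulmx_suml linearN linear_sum /=.
    rewrite eqmx_opp summx_sub // => j _.
    rewrite -[Ad ^+ (k - nd) * _]/(Ad ^+ (k - nd) *m (c j *: Ad ^+ j)).
    rewrite -scalemxAr -scalemxAl linearZ scalemx_sub //.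
    rewrite -[Ad ^+ (k - nd) *m Ad ^+ j]/(Ad ^+ (k - nd) * Ad ^+ j) -exprD IH //.
    by have := ltn_ord j; lia.
  have rkP : \rank P = (L * nu + nx + nu_rk)%N.
    rewrite /P rank_diag_block_mx /P1 rank_mxcol1 rank_diag_block_mx !mxrank1 hrk.
    rewrite sum_nat_const card_ord; lia.
  have HP : (H^T == P^T)%MS.
    apply/andP; split.
      apply/row_subP => k; rewrite -tr_col /H col_col_mx !col_hankel.
      have [v hv] : exists v, Ad ^+ k *m dm0 = Kd *m v.
        have /submxP [Dv e] := inK k; exists Dv^T.
        by rewrite -[LHS]trmxK e trmx_mul trmxK.
      have -> : \mxcol_(a < 1) xbm (0 + a + k)%N =
                \mxcol_(a < 1) col_mx (usubmx (xbm k)) (Kd *m v).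
        apply: eq_mxcol => a; rewrite (ord1 a) /= -hv.
        by rewrite -(traj_d A Bd Ad B xm0 dm0 um k) vsubmxK.
      by rewrite -(Pmul _ v (\mxcol_(a < L) um (0 + a + k)%N)) trmx_mul submxMl.
    apply/row_subP => j; rewrite -tr_col colE.
    have [g hg] : exists g : 'cV[R]_M, H *m g = P *m delta_mx j 0.
      by apply: colspace_ker => w hw; rewrite mulmxA KL // mul0mx.
    by rewrite -hg trmx_mul submxMl.
  by rewrite -mxrank_tr (eqmx_rank HP) mxrank_tr rkP.
move=> x0 d0 u hd; have [g hg] := ii x0 d0 u hd; exists g.
move: hg; rewrite /H !mul_col_mx => /eq_col_mx [hgx hgu].
rewrite hgu; congr col_mx.
have hx0 : \sum_(b < M) g b 0 *: traj Ab Bb (col_mx xm0 dm0) um b = col_mx x0 d0.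
  have := congr1 (fun X => submxcol X ord0) hgx; rewrite hankel_mul /stack !mxcolK.
  by under eq_bigr do rewrite !add0n.
have hu : forall a : 'I_L, \sum_(b < M) g b 0 *: um (a + b)%N = u a.
  move=> a; have := congr1 (fun X => submxcol X a) hgu; rewrite hankel_mul /stack !mxcolK.
  by under eq_bigr do rewrite add0n.
rewrite hankel_mul /stack; apply: eq_mxcol => a.
rewrite /ym /outp.
under eq_bigr do rewrite add0n scalerDr scalemxAr scalemxAr.
rewrite big_split /= -!mulmx_sumr traj_super hx0 hu; congr (Cb *m _ + _).
apply: traj_ext => p pa; have pL : (p < L)%N by have := ltn_ord a; lia.
by have := hu (Ordinal pL).
Qed.
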